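(* Let $\Psi=(\Gamma_1,\dots,\Gamma_r)$ and $\Psi'=(\Gamma'_1,\dots,\Gamma'_r)$ be tripartite states of format $r\times I_1\times I_2$ with $\Gamma_1,\dots,\Gamma_r$ linearly independent and $\Gamma'_1,\dots,\Gamma'_r$ linearly independent. Let $U,U'$ be the invertible matrices built from these states and chosen complementary states. Consider the following condition: ( * ) there exist an invertible $P\in\mathbb C^{r\times r}$, an invertible $\overline P\in\mathbb C^{(I_1I_2-r)\times(I_1I_2-r)}$ and some $Y$ such that, with $\widetilde P=\begin{pmatrix}P&Y\\0&\overline P\end{pmatrix}$, $$\operatorname{rank}\mathcal W\big(U\widetilde P\,U'^{-1}\vec a\big)=\operatorname{rank}\mathcal W(\vec a)\quad\text{for every }\vec a\in\mathbb C^{I_1I_2}.$$ (a) If $\Psi'$ and $\Psi$ are SLOCC equivalent, then ( * ) holds. (b) If $I_1\neq I_2$ and ( * ) holds, then $\Psi'$ and $\Psi$ are SLOCC equivalent. (c) If $I_1=I_2$ and ( * ) holds, then $\Psi'$ is SLOCC equivalent either to $\Psi$ or to $\Psi^{\mathrm T}:=(\Gamma_1^{\mathrm T},\dots,\Gamma_r^{\mathrm T})$. The state $\Psi^{\mathrm T}$ is $\Psi$ with the second and third parties exchanged.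
   Context: **Tripartite states as tuples.** A tuple $(\Gamma_1,\dots,\Gamma_r)$ with $\Gamma_k\in\mathbb C^{I_1\times I_2}$ denotes the state $$\sum_k\sum_{i_1,i_2}(\Gamma_k)_{i_1i_2}|k\rangle|i_1\rangle|i_2\rangle.$$ **SLOCC equivalence.** Two such states are SLOCC equivalent if they are related by $P_0\otimes A_1\otimes A_2$ with $P_0,A_1,A_2$ invertible, i.e. $\Gamma'_k=\sum_l(P_0)_{kl}A_1\Gamma_lA_2^{\mathrm T}$. **Vectorization and folding.** $\mathcal V(\Gamma)$ is the column-stacking vectorization of $\Gamma\in\mathbb C^{I_1\times I_2}$, namely $(\Gamma_{11},\dots,\Gamma_{I_11},\Gamma_{12},\dots,\Gamma_{I_1I_2})^{\mathrm T}$. For $\vec a=(a_1,\dots,a_{I_1I_2})^{\mathrm T}$, the folding $\mathcal W(\vec a)\in\mathbb C^{I_1\times I_2}$ is the inverse operation, with $(p,q)$ entry $a_{(q-1)I_1+p}$. **Complementary state.** A complementary state of $(\Gamma_1,\dots,\Gamma_r)$ is any tuple $(\Gamma_{r+1},\dots,\Gamma_{I_1I_2})$ such that $\Gamma_1,\dots,\Gamma_{I_1I_2}$ form a basis of $\mathbb C^{I_1\times I_2}$. **The matrices $U,U'$.** Given complementary states, set $U=(\mathcal V(\Gamma_1),\dots,\mathcal V(\Gamma_{I_1I_2}))$ and $U'=(\mathcal V(\Gamma'_1),\dots,\mathcal V(\Gamma'_{I_1I_2}))$. *)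

(* Defs.v *)
From HB Require Import structures.
From mathcomp Require Import all_boot all_order all_algebra.
Set Implicit Arguments. Unset Strict Implicit. Unset Printing Implicit Defensive.
Import Order.TTheory GRing.Theory Num.Theory.
Local Open Scope ring_scope.

Section Defs.
Variable F : fieldType.

(* A tripartite state of format r x I1 x I2 is a tuple G : 'I_r -> 'M_(I1, I2). *)

(* Column-stacking vectorization V(A): entry number q*I1 + p (0-based) is A p q.
   mxvec is row-major, so column stacking of A is mxvec of A^T. *)
Definition vecc (I1 I2 : nat) (A : 'M[F]_(I1, I2)) : 'cV[F]_(I2 * I1) :=
  (mxvec A^T)^T.

(* Folding W(a): inverse of vecc; (p,q) entry is a_(q*I1 + p). *)
Definition foldc (I1 I2 : nat) (a : 'cV[F]_(I2 * I1)) : 'M[F]_(I1, I2) :=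
  (vec_mx a^T)^T.

Definition lin_indep (r I1 I2 : nat) (G : 'I_r -> 'M[F]_(I1, I2)) : bool :=
  row_free (\matrix_(k < r) mxvec (G k)).

Definition Umx (r s I1 I2 : nat) (e : (r + s = I2 * I1)%N)
    (G : 'I_r -> 'M[F]_(I1, I2)) (Gc : 'I_s -> 'M[F]_(I1, I2)) : 'M[F]_(I2 * I1) :=
  castmx (erefl (I2 * I1)%N, e)
    (row_mx (\matrix_(i, k) vecc (G k) i 0) (\matrix_(i, k) vecc (Gc k) i 0)).

(* Gc is a complementary state of G: all together form a basis, i.e. U invertible. *)
Definition complementary (r s I1 I2 : nat) (e : (r + s = I2 * I1)%N)
    (G : 'I_r -> 'M[F]_(I1, I2)) (Gc : 'I_s -> 'M[F]_(I1, I2)) : bool :=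
  Umx e G Gc \in unitmx.

Definition Ptilde (r s n : nat) (e : (r + s = n)%N)
    (P : 'M[F]_r) (Y : 'M[F]_(r, s)) (Pbar : 'M[F]_s) : 'M[F]_n :=
  castmx (e, e) (block_mx P Y 0 Pbar).

Definition slocc (r I1 I2 : nat) (G G' : 'I_r -> 'M[F]_(I1, I2)) : Prop :=
  exists (P0 : 'M[F]_r) (A1 : 'M[F]_I1) (A2 : 'M[F]_I2),
    [/\ P0 \in unitmx, A1 \in unitmx, A2 \in unitmx &
      forall k : 'I_r, G' k = \sum_(l < r) P0 k l *: (A1 *m G l *m A2^T)].

Definition cond_star (r s I1 I2 : nat) (e : (r + s = I2 * I1)%N)
    (G : 'I_r -> 'M[F]_(I1, I2)) (Gc : 'I_s -> 'M[F]_(I1, I2))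
    (G' : 'I_r -> 'M[F]_(I1, I2)) (Gc' : 'I_s -> 'M[F]_(I1, I2)) : Prop :=
  exists (P : 'M[F]_r) (Pbar : 'M[F]_s) (Y : 'M[F]_(r, s)),
    [/\ P \in unitmx, Pbar \in unitmx &
      forall a : 'cV[F]_(I2 * I1),
        \rank (foldc (Umx e G Gc *m Ptilde e P Y Pbar *m invmx (Umx e G' Gc') *m a))
        = \rank (foldc a)].

Definition stateT (r I1 I2 : nat) (G : 'I_r -> 'M[F]_(I1, I2)) : 'I_r -> 'M[F]_(I2, I1) :=
  fun k => (G k)^T.

End Defs.

(* Main.v *)
Require Import Defs.
From HB Require Import structures.
From mathcomp Require Import all_boot all_order all_algebra.
From Stdlib Require Import Classical.
Set Implicit Arguments. Unset Strict Implicit. Unset Printing Implicit Defensive.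
Import Order.TTheory GRing.Theory Num.Theory.
Local Open Scope ring_scope.

Section Gen.
Variable F : fieldType.

Definition outer (m n : nat) (x : 'rV[F]_m) (y : 'rV[F]_n) : 'M[F]_(m, n) := x^T *m y.

Lemma outerE m n (x : 'rV[F]_m) (y : 'rV[F]_n) i j : outer x y i j = x 0 i * y 0 j.
Proof. by rewrite /outer !mxE big_ord1 !mxE. Qed.

Lemma outer_eq0 m n (x : 'rV[F]_m) (y : 'rV[F]_n) :
  outer x y = 0 -> x != 0 -> y = 0.
Proof.
move=> h /rV0Pn [i xi]; apply/rowP => j; rewrite mxE.
have := congr1 (fun M : 'M[F]_(m, n) => M i j) h; rewrite outerE mxE => /eqP.
by rewrite mulf_eq0 (negPf xi) => /eqP.
Qed.

Lemma rank_outer m n (x : 'rV[F]_m) (y : 'rV[F]_n) : (\rank (outer x y) <= 1)%N.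
Proof. by apply: leq_trans (mxrankM_maxr _ _) (rank_leq_row _). Qed.

Lemma rank1_decomp m n (X : 'M[F]_(m, n)) :
  (\rank X <= 1)%N -> exists a b, X = outer a b.
Proof.
move=> hr; have [->|nz] := eqVneq X 0; first by exists 0, 0; rewrite /outer mulmx0.
have [i ri] : exists i, row i X != 0.
  apply/existsP; apply: contraR nz; rewrite negb_exists => /forallP h.
  by apply/eqP/row_matrixP => i; rewrite row0; apply/eqP; have := h i; rewrite negbK.
have sb : (X <= row i X)%MS.
  have := mxrank_leqif_sup (row_sub i X); case=> _ <-.
  by rewrite eqn_leq mxrankS ?row_sub // rank_rV ri.
case/submxP: sb => D ->; exists D^T, (row i X); by rewrite /outer trmxK.
Qed.

Lemma rank2 m (a c : 'rV[F]_m) : a != 0 -> ~~ (c <= a)%MS -> \rank (col_mx a c) = 2.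
Proof.
move=> a0 ca; apply/eqP; rewrite eqn_leq; apply/andP; split.
  exact: (leq_trans (rank_leq_row _)).
rewrite -addsmxE.
have [le eqi] := mxrank_leqif_sup (addsmxSl a c).
have ne : (\rank a != \rank (a + c)%MS) by rewrite eqi addsmx_sub submx_refl /=.
move: le ne; rewrite rank_rV a0 /= => le ne.
by rewrite ltn_neqAle ne le.
Qed.

Lemma P2 m n (a c : 'rV[F]_m) (b d : 'rV[F]_n) :
  (\rank (outer a b + outer c d)%R <= 1)%N -> a != 0 -> b != 0 -> (c <= a)%MS || (d <= b)%MS.
Proof.
move=> hr a0 b0; apply/negPn/negP => /norP [ca db].
have e : outer a b + outer c d = (col_mx a c)^T *m col_mx b d.
  by rewrite tr_col_mx mul_row_col.
have rf : row_free (col_mx b d) by rewrite /row_free rank2.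
move: hr; rewrite e mxrankMfree // mxrank_tr rank2 //.
Qed.


Lemma outer_scalel m n k (x : 'rV[F]_m) (y : 'rV[F]_n) : outer (k *: x) y = k *: outer x y.
Proof. by rewrite /outer linearZ /= scalemxAl. Qed.

Lemma outer_scaler m n k (x : 'rV[F]_m) (y : 'rV[F]_n) : outer x (k *: y) = k *: outer x y.
Proof. by rewrite /outer scalemxAr. Qed.

Lemma outer_scale m n k (x : 'rV[F]_m) (y : 'rV[F]_n) : outer (k *: x) y = outer x (k *: y).
Proof. by rewrite outer_scalel outer_scaler. Qed.

Lemma outerDl m n (x1 x2 : 'rV[F]_m) (y : 'rV[F]_n) : outer (x1 + x2) y = outer x1 y + outer x2 y.
Proof. by rewrite /outer linearD /= mulmxDl. Qed.

Lemma outerDr m n (x : 'rV[F]_m) (y1 y2 : 'rV[F]_n) : outer x (y1 + y2) = outer x y1 + outer x y2.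
Proof. by rewrite /outer mulmxDr. Qed.

Lemma RS p q r (h : {linear 'rV[F]_p -> 'M[F]_(q, r)})
  (hr : forall y, (\rank (h y) <= 1)%N) a b y0 :
  a != 0 -> b != 0 -> h y0 = outer a b ->
  (forall y, exists z, h y = outer a z) \/ (forall y, exists w, h y = outer w b).
Proof.
move=> a0 b0 h0.
have key : forall y, (exists z, h y = outer a z) \/ (exists w, h y = outer w b).
  move=> y; have [c [d hy]] := rank1_decomp (hr y).
  have := hr (y0 + y); rewrite linearD h0 hy => /P2 /(_ a0 b0) /orP [/sub_rVP [k ->] | /sub_rVP [k ->]].
    by left; exists (k *: d); rewrite outer_scale.
  by right; exists (k *: c); rewrite outer_scale.
case: (classic (forall y, exists z, h y = outer a z)) => [H|H]; [by left|right].
have [y1 ny1] := not_all_ex_not _ _ H.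
move=> y2; case: (key y2) => [[z2 e2]|//].
have [[z ?]|[w1 e1]] := key y1; first by exfalso; apply ny1; exists z.
case: (boolP (z2 <= b)%MS) => [/sub_rVP [k ek]|nzb].
  by exists (k *: a); rewrite e2 ek outer_scale.
have z20 : z2 != 0 by apply: contraNneq nzb => ->; rewrite sub0mx.
have := hr (y2 + y1); rewrite linearD e1 e2 => /P2 /(_ a0 z20) /orP [/sub_rVP [k ek]|/sub_rVP [k ek]].
  by exfalso; apply ny1; exists (k *: b); rewrite e1 ek outer_scale.
have k0 : k != 0 by apply: contraNneq b0 => k0; rewrite ek k0 scale0r.
by exfalso; move/negP: nzb; apply; rewrite ek; apply/sub_rVP; exists k^-1; rewrite scalerA mulVf // scale1r.
Qed.

Lemma lin_sum_entry p q r (h : {linear 'rV[F]_p -> 'M[F]_(q, r)}) y i j :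
  h y i j = \sum_k y 0 k * h (delta_mx 0 k) i j.
Proof.
rewrite {1}(row_sum_delta y) linear_sum summxE; apply: eq_bigr => k _.
by rewrite linearZ mxE.
Qed.

Lemma rowG p q r (h : {linear 'rV[F]_p -> 'M[F]_(q, r)}) a :
  a != 0 -> (forall y, exists z, h y = outer a z) ->
  exists G : 'M[F]_(p, r), forall y, h y = outer a (y *m G).
Proof.
move=> a0 H; have [i ai] := rV0Pn _ a0.
exists (\matrix_(k, j) ((a 0 i)^-1 * h (delta_mx 0 k) i j)) => y.
have [z ez] := H y; rewrite ez; congr outer; apply/rowP => j; rewrite !mxE.
transitivity ((a 0 i)^-1 * h y i j); first by rewrite ez outerE mulKf.
rewrite [h y i j]lin_sum_entry mulr_sumr; apply: eq_bigr => k _; rewrite !mxE.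
by rewrite mulrCA.
Qed.


Lemma outer0l m n (y : 'rV[F]_n) : outer (0 : 'rV[F]_m) y = 0.
Proof. by rewrite /outer trmx0 mul0mx. Qed.

Lemma outer0r m n (x : 'rV[F]_m) : outer x (0 : 'rV[F]_n) = 0.
Proof. by rewrite /outer mulmx0. Qed.

Lemma tr_outer m n (x : 'rV[F]_m) (y : 'rV[F]_n) : (outer x y)^T = outer y x.
Proof. by rewrite /outer trmx_mul trmxK. Qed.

Lemma outer_eq0l m n (x : 'rV[F]_m) (y : 'rV[F]_n) :
  outer x y = 0 -> y != 0 -> x = 0.
Proof. by move=> h; apply: outer_eq0; rewrite -tr_outer h trmx0. Qed.

Definition fx m n (f : 'M[F]_(m, n) -> 'M[F]_(m, n)) (x : 'rV[F]_m) : 'rV[F]_n -> 'M[F]_(m, n) :=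
  fun y => f (outer x y).
Definition fxT m n (f : 'M[F]_(m, n) -> 'M[F]_(m, n)) (x : 'rV[F]_m) : 'rV[F]_n -> 'M[F]_(n, m) :=
  fun y => (f (outer x y))^T.
Definition trconj m n (f : 'M[F]_(m, n) -> 'M[F]_(m, n)) : 'M[F]_(n, m) -> 'M[F]_(n, m) :=
  fun Z => (f Z^T)^T.
Definition trpost n (f : 'M[F]_n -> 'M[F]_n) : 'M[F]_n -> 'M[F]_n :=
  fun X => (f X)^T.

Section LinInst.
Variables m n : nat.
Variable f : {linear 'M[F]_(m, n) -> 'M[F]_(m, n)}.
Variable g : {linear 'M[F]_n -> 'M[F]_n}.
Variable x : 'rV[F]_m.
Fact fx_lin : linear (fx f x).
Proof. by move=> k u v; rewrite /fx outerDr outer_scaler linearD linearZ. Qed.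
Fact fxT_lin : linear (fxT f x).
Proof. by move=> k u v; rewrite /fxT outerDr outer_scaler linearD linearZ /= linearD linearZ. Qed.
Fact trconj_lin : linear (trconj f).
Proof. by move=> k u v; rewrite /trconj !(linearD, linearZ). Qed.
Fact trpost_lin : linear (trpost g).
Proof. by move=> k u v; rewrite /trpost !(linearD, linearZ). Qed.
End LinInst.

HB.instance Definition _ m n (f : {linear 'M[F]_(m, n) -> 'M[F]_(m, n)}) x :=
  GRing.isLinear.Build F _ _ _ (fx f x) (fx_lin f x).
HB.instance Definition _ m n (f : {linear 'M[F]_(m, n) -> 'M[F]_(m, n)}) x :=
  GRing.isLinear.Build F _ _ _ (fxT f x) (fxT_lin f x).
HB.instance Definition _ m n (f : {linear 'M[F]_(m, n) -> 'M[F]_(m, n)}) :=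
  GRing.isLinear.Build F _ _ _ (trconj f) (trconj_lin f).
HB.instance Definition _ n (g : {linear 'M[F]_n -> 'M[F]_n}) :=
  GRing.isLinear.Build F _ _ _ (trpost g) (trpost_lin g).

Definition Rowtype m n (f : 'M[F]_(m, n) -> 'M[F]_(m, n)) (x : 'rV[F]_m) :=
  exists a (G : 'M[F]_n), [/\ a != 0, G \in unitmx & forall y, f (outer x y) = outer a (y *m G)].
Definition Coltype m n (f : 'M[F]_(m, n) -> 'M[F]_(m, n)) (x : 'rV[F]_m) :=
  exists b (W : 'M[F]_(n, m)), [/\ b != 0, row_free W & forall y, f (outer x y) = outer (y *m W) b].

Section RP.
Variables m n : nat.
Variable f : {linear 'M[F]_(m, n) -> 'M[F]_(m, n)}.
Hypothesis frk : forall X, \rank (f X) = \rank X.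

Lemma f_eq0 X : f X = 0 -> X = 0.
Proof. by move=> h; apply/eqP; rewrite -mxrank_eq0 -frk h mxrank0. Qed.

Lemma f_inj : injective f.
Proof. by move=> X Y h; apply/eqP; rewrite -subr_eq0; apply/eqP/f_eq0; rewrite linearB h subrr. Qed.

Lemma types (x : 'rV[F]_m) (y0 : 'rV[F]_n) : x != 0 -> y0 != 0 -> Rowtype f x \/ Coltype f x.
Proof.
move=> x0 y00.
have hr : forall y, (\rank (fx f x y) <= 1)%N by move=> y; rewrite /fx frk rank_outer.
have nz : fx f x y0 != 0.
  by apply: contra y00 => /eqP /f_eq0 /outer_eq0 -> //.
have [a [b eab]] := rank1_decomp (hr y0).
have a0 : a != 0 by apply: contraNneq nz => a0; rewrite eab a0 outer0l.
have b0 : b != 0 by apply: contraNneq nz => b0; rewrite eab b0 outer0r.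
case: (RS hr a0 b0 eab) => H.
  left; have [G eG] := rowG a0 H; exists a, G; split => //.
  rewrite -row_free_unit; apply/inj_row_free => v vG.
  have := eG v; rewrite vG outer0r => /f_eq0 /outer_eq0; exact.
right.
have H' : forall y, exists z, fxT f x y = outer b z.
  by move=> y; have [w ew] := H y; exists w; rewrite /fxT -[outer b w]tr_outer -ew.
have [W eW] := rowG b0 H'; exists b, W; split => //.
  apply/inj_row_free => v vW.
  have := eW v; rewrite vW outer0r /fxT => /(congr1 trmx); rewrite trmxK trmx0.
  by move/f_eq0/outer_eq0; exact.
by move=> y; have := eW y; rewrite /fxT -tr_outer => /(congr1 trmx); rewrite !trmxK.
Qed.

Lemma coltype_le (x : 'rV[F]_m) : Coltype f x -> (n <= m)%N.
Proof. by case=> b [W [_ rf _]]; move/eqP: rf => <-; exact: rank_leq_col. Qed.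

Lemma row_col_false (x1 x2 : 'rV[F]_m) : (1 < n)%N -> Rowtype f x1 -> Coltype f x2 -> False.
Proof.
move=> n2 [a1 [G1 [a10 G1u e1]]] [b2 [W2 [b20 W2f e2]]].
pose p := b2 *m invmx G1.
have G1f : row_free G1 by rewrite row_free_unit.
have C : forall y : 'rV[F]_n, (y *m W2 <= a1)%MS || (y <= p)%MS.
  move=> y; have [yz|y0] := eqVneq y 0.
    apply/orP; right; rewrite yz; exact: sub0mx.
  have yG : y *m G1 != 0 by rewrite mulmx_free_eq0.
  have := rank_outer (x1 + x2) y; rewrite -frk outerDl linearD e1 e2.
  move/P2 => /(_ a10 yG) /orP [->//|/sub_rVP [k ek]]; apply/orP; right.
  have k0 : k != 0 by apply: contraNneq b20 => k0; rewrite ek k0 scale0r.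
  apply/sub_rVP; exists k^-1; rewrite /p ek -scalemxAl mulmxK // scalerA mulVf // scale1r //.
have [i ni] : exists i, ~~ (row i (1%:M : 'M[F]_n) <= p)%MS.
  apply/row_subPn; rewrite sub1mx /row_full; apply: contraTneq n2 => <-.
  by rewrite -leqNgt (leq_trans (rank_leq_row _)).
set y := row i 1%:M in ni.
have s1 : (y *m W2 <= a1)%MS by have := C y; rewrite (negPf ni) orbF.
have nyp : ~~ ((y + p)%R <= p)%MS.
  apply: contra ni => /sub_rVP [k ek]; apply/sub_rVP; exists (k - 1).
  by rewrite scalerBl scale1r -ek addrK.
have s2 : ((y + p)%R *m W2 <= a1)%MS by have := C (y + p); rewrite (negPf nyp) orbF.
have /sub_rVP [k2 ek2] := s1.
have /sub_rVP [k1 ek1] := s2.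
have e3 : p *m W2 = (k1 - k2) *: a1 by rewrite scalerBl -ek1 -ek2 mulmxDl addrC addKr.
have ez : (k1 - k2) *: y - k2 *: p = 0.
  apply/eqP; rewrite -(mulmx_free_eq0 _ W2f) mulmxBl -!scalemxAl e3 ek2.
  by rewrite !scalerA mulrC subrr.
have [k3|k3] := eqVneq (k1 - k2) 0.
  move: e3; rewrite k3 scale0r => /eqP; rewrite (mulmx_free_eq0 _ W2f) /p.
  have Gi : row_free (invmx G1) by rewrite row_free_unit unitmx_inv.
  by rewrite (mulmx_free_eq0 _ Gi) (negPf b20).
apply: (negP ni); apply/sub_rVP; exists ((k1 - k2)^-1 * k2).
by rewrite -scalerA -(scalerK k3 y); congr (_ *: _); apply/eqP; rewrite -subr_eq0 ez.
Qed.

End RP.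


Lemma PAR n (G1 G2 : 'M[F]_n.+1) : G1 \in unitmx ->
  (forall y : 'rV[F]_n.+1, (y *m G2 <= y *m G1)%MS) -> exists c, G2 = c *: G1.
Proof.
move=> G1u H; pose T := G2 *m invmx G1.
have HT : forall y : 'rV[F]_n.+1, (y *m T <= y)%MS.
  move=> y; have := submxMr (invmx G1) (H y).
  by rewrite /T mulmxA -[y *m G1 *m _]mulmxA mulmxV // mulmx1.
have eT : T = G2 *m invmx G1 by [].
clearbody T.
have off : forall i j, i != j -> T i j = 0.
  move=> i j ij; have /sub_rVP [k ek] := HT (delta_mx 0 i).
  have := congr1 (fun v : 'rV[F]_n.+1 => v 0 j) ek.
  by rewrite -rowE !mxE eqxx /= eq_sym (negPf ij) mulr0.
have dg : forall i, T i i = T 0 0.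
  move=> i; have [->//|i0] := eqVneq i 0.
  have /sub_rVP [k ek] := HT (delta_mx 0 0 + delta_mx 0 i).
  have h1 := congr1 (fun v : 'rV[F]_n.+1 => v 0 i) ek.
  have h2 := congr1 (fun v : 'rV[F]_n.+1 => v 0 0) ek.
  have i0' : (0 : 'I_n.+1) != i by rewrite eq_sym.
  move: h1 h2; rewrite /= mulmxDl -!rowE !mxE !eqxx /= (negPf i0) (negPf i0').
  rewrite (off _ _ i0) (off _ _ i0').
  by rewrite !mulr1n !mulr0n !add0r !addr0 mulr1 => -> ->.
exists (T 0 0).
have -> : T 0 0 *: G1 = (T 0 0)%:M *m G1 by rewrite mul_scalar_mx.
have <- : T = (T 0 0)%:M.
  apply/matrixP => i j; rewrite !mxE; have [<-|ij] := eqVneq i j.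
    by rewrite dg mulr1n.
  by rewrite off // mulr0n.
by rewrite eT mulmxKV.
Qed.


Lemma delta_nz n : (delta_mx 0 0 : 'rV[F]_n.+1) != 0.
Proof. by apply/rV0Pn; exists 0; rewrite mxE !eqxx oner_eq0. Qed.

Lemma AllRow m n (f : {linear 'M[F]_(m.+1, n.+1) -> 'M[F]_(m.+1, n.+1)})
  (frk : forall X, \rank (f X) = \rank X)
  (H : forall i : 'I_m.+1, Rowtype f (delta_mx 0 i)) :
  exists A B, [/\ A \in unitmx, B \in unitmx & forall X, f X = A *m X *m B].
Proof.
have [a0 [G0 [a00 G0u e0]]] := H 0.
have G0f : row_free G0 by rewrite row_free_unit.
have step1 : forall i, exists a', forall y, f (outer (delta_mx 0 i) y) = outer a' (y *m G0).
  move=> i; have [->|i0] := eqVneq i 0; first by exists a0.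
  have [ai [Gi [ai0 Giu ei]]] := H i.
  have indep : ~~ (ai <= a0)%MS.
    apply/negP => /sub_rVP [k ek].
    pose y : 'rV[F]_n.+1 := delta_mx 0 0.
    have e : outer (delta_mx 0 0) (k *: (y *m Gi) *m invmx G0) = outer (delta_mx 0 i) y.
      by apply: (f_inj frk); rewrite e0 ei mulmxKV // ek outer_scale.
    have := congr1 (fun M : 'M[F]_(m.+1, n.+1) => M i 0) e.
    rewrite !outerE !mxE eqxx (negPf i0) /= mul0r eqxx mulr1 => /eqP.
    by rewrite eq_sym oner_eq0.
  have par : forall y : 'rV[F]_n.+1, (y *m Gi <= y *m G0)%MS.
    move=> y; have [->|y0] := eqVneq y 0; first by rewrite !mul0mx; exact: sub0mx.
    have yG : y *m G0 != 0 by rewrite mulmx_free_eq0.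
    have := rank_outer (delta_mx 0 0 + delta_mx 0 i) y; rewrite -frk outerDl linearD e0 ei.
    by move/P2 => /(_ a00 yG); rewrite (negPf indep).
  have [c ec] := PAR G0u par.
  by exists (c *: ai) => y; rewrite ei ec -scalemxAr outer_scale.
pose M := \matrix_(i, j) f (outer (delta_mx 0 i) (delta_mx 0 0 *m invmx G0)) j 0.
have rowM : forall i y, f (outer (delta_mx 0 i) y) = outer (row i M) (y *m G0).
  move=> i y; have [a' ea] := step1 i.
  suff -> : row i M = a' by apply: ea.
  by apply/rowP => j; rewrite !mxE ea mulmxKV // outerE mxE !eqxx mulr1.
have fX : forall X, f X = M^T *m X *m G0.
  move=> X; rewrite {1}[X]matrix_sum_delta linear_sum [in RHS](matrix_sum_delta X).
  rewrite mulmx_sumr mulmx_suml; apply: eq_bigr => i _.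
  rewrite linear_sum mulmx_sumr mulmx_suml; apply: eq_bigr => j _.
  rewrite linearZ -scalemxAr -scalemxAl; congr (_ *: _).
  have -> : delta_mx i j = outer (delta_mx 0 i) (delta_mx 0 j) :> 'M[F]_(m.+1, n.+1).
    by rewrite /outer trmx_delta mul_delta_mx.
  by rewrite rowM /outer rowE trmx_mul !mulmxA.
exists M^T, G0; split => //.
rewrite unitmx_tr -row_free_unit; apply/inj_row_free => v vM.
have := fX (outer v (delta_mx 0 0)); rewrite /outer mulmxA -trmx_mul vM trmx0 !mul0mx.
by move/(f_eq0 frk)/outer_eq0l; apply; apply: delta_nz.
Qed.


Lemma deltai_nz n (i : 'I_n) : (delta_mx 0 i : 'rV[F]_n) != 0.
Proof. by apply/rV0Pn; exists i; rewrite mxE !eqxx oner_eq0. Qed.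

Lemma core_rect m n (f : {linear 'M[F]_(m, n) -> 'M[F]_(m, n)})
  (frk : forall X, \rank (f X) = \rank X) : m != n ->
  exists A B, [/\ A \in unitmx, B \in unitmx & forall X, f X = A *m X *m B].
Proof.
revert f frk; case: m => [|m]; case: n => [|n] f frk mn.
- by exists 1%:M, 1%:M; split; rewrite ?unitmx1 // => X; rewrite (flatmx0 (f X)) (flatmx0 (_ *m _)).
- by exists 1%:M, 1%:M; split; rewrite ?unitmx1 // => X; rewrite (flatmx0 (f X)) (flatmx0 (_ *m _)).
- by exists 1%:M, 1%:M; split; rewrite ?unitmx1 // => X; rewrite (thinmx0 (f X)) (thinmx0 (_ *m _)).
case: (ltngtP m n) => [lt|gt|eq]; last by rewrite eq eqxx in mn.
  refine (AllRow frk _) => i.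
  have [//|Ci] := types frk (deltai_nz i) (deltai_nz (0 : 'I_n.+1)).
  by have := coltype_le Ci; rewrite ltnS leqNgt lt.
have grk : forall Z, \rank (trconj f Z) = \rank Z by move=> Z; rewrite /trconj mxrank_tr frk mxrank_tr.
have [A [B [Au Bu eg]]] : exists A B, [/\ A \in unitmx, B \in unitmx &
    forall Z, trconj f Z = A *m Z *m B].
  refine (AllRow grk _) => i.
  have [//|Ci] := types grk (deltai_nz i) (deltai_nz (0 : 'I_m.+1)).
  by have := coltype_le Ci; rewrite ltnS leqNgt gt.
exists B^T, A^T; split; rewrite ?unitmx_tr // => X.
have := eg X^T; rewrite /trconj trmxK => /(congr1 trmx); rewrite trmxK => ->.
by rewrite !trmx_mul trmxK mulmxA.
Qed.

Lemma core_sq n (f : {linear 'M[F]_n -> 'M[F]_n})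
  (frk : forall X, \rank (f X) = \rank X) :
  (exists A B, [/\ A \in unitmx, B \in unitmx & forall X, f X = A *m X *m B]) \/
  (exists A B, [/\ A \in unitmx, B \in unitmx & forall X, f X = A *m X^T *m B]).
Proof.
revert f frk; case: n => [|n] f frk.
  by left; exists 1%:M, 1%:M; split; rewrite ?unitmx1 // => X; rewrite (flatmx0 (f X)) (flatmx0 (_ *m _)).
have n2 : forall i : 'I_n.+1, i != 0 -> (1 < n.+1)%N.
  by move=> i i0; apply: leq_ltn_trans (ltn_ord i); rewrite lt0n; exact: i0.
have [R0|C0] := types frk (deltai_nz (0 : 'I_n.+1)) (deltai_nz (0 : 'I_n.+1)).
  left; refine (AllRow frk _) => i. have [->//|i0] := eqVneq i 0.
  have [//|Ci] := types frk (deltai_nz i) (deltai_nz (0 : 'I_n.+1)).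
  by case: (row_col_false frk (n2 _ i0) R0 Ci).
right.
have hrk : forall X, \rank (trpost f X) = \rank X by move=> X; rewrite /trpost mxrank_tr frk.
have [A [B [Au Bu eh]]] : exists A B, [/\ A \in unitmx, B \in unitmx &
    forall X, trpost f X = A *m X *m B].
  refine (AllRow hrk _) => i.
  have Ci : Coltype f (delta_mx 0 i).
    have [->//|i0] := eqVneq i 0.
    have [Ri|//] := types frk (deltai_nz i) (deltai_nz (0 : 'I_n.+1)).
    by case: (row_col_false frk (n2 _ i0) Ri C0).
  case: Ci => b [W [b0 Wf eW]]; exists b, W; split; rewrite -?row_free_unit //.
  by move=> y; change ((f (outer (delta_mx 0 i) y))^T = outer b (y *m W)); rewrite eW tr_outer.
exists B^T, A^T; split; rewrite ?unitmx_tr // => X.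
have := eh X; rewrite /trpost => /(congr1 trmx); rewrite trmxK => ->.
by rewrite !trmx_mul mulmxA.
Qed.

End Gen.

Section App.
Variable F : fieldType.

Section LinInst2.
Variables I1 I2 : nat.
Fact foldc_lin : linear (@foldc F I1 I2).
Proof. by move=> k u v; rewrite /foldc !(linearD, linearZ). Qed.
Fact vecc_lin : linear (@vecc F I1 I2).
Proof. by move=> k u v; rewrite /vecc !(linearD, linearZ). Qed.
End LinInst2.
HB.instance Definition _ I1 I2 := GRing.isLinear.Build F _ _ _ (@foldc F I1 I2) (@foldc_lin I1 I2).
HB.instance Definition _ I1 I2 := GRing.isLinear.Build F _ _ _ (@vecc F I1 I2) (@vecc_lin I1 I2).

Lemma foldcK I1 I2 (X : 'M[F]_(I1, I2)) : foldc (vecc X) = X.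
Proof. by rewrite /foldc /vecc trmxK mxvecK trmxK. Qed.

Lemma veccK I1 I2 (a : 'cV[F]_(I2 * I1)) : vecc (foldc a) = a.
Proof. by rewrite /foldc /vecc trmxK vec_mxK trmxK. Qed.

Definition appmap N I1 I2 (Mx : 'M[F]_N) (e : N = (I2 * I1)%N) (X : 'M[F]_(I1, I2)) : 'M[F]_(I1, I2) :=
  foldc (castmx (e, e) Mx *m vecc X).
Fact appmap_lin N I1 I2 Mx e : linear (@appmap N I1 I2 Mx e).
Proof. by move=> k u v; rewrite /appmap !linearP. Qed.
HB.instance Definition _ N I1 I2 Mx e := GRing.isLinear.Build F _ _ _ (@appmap N I1 I2 Mx e) (appmap_lin Mx e).

Definition sandw p q r t (A : 'M[F]_(p, q)) (B : 'M[F]_(r, t)) (Z : 'M[F]_(q, r)) : 'M[F]_(p, t) :=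
  A *m Z *m B.
Fact sandw_lin p q r t A B : linear (@sandw p q r t A B).
Proof. by move=> k u v; rewrite /sandw mulmxDr mulmxDl -scalemxAr -scalemxAl. Qed.
HB.instance Definition _ p q r t A B := GRing.isLinear.Build F _ _ _ (@sandw p q r t A B) (sandw_lin A B).

Lemma C1 m n p q (e : n = p) (A : 'M[F]_(m, n)) (B : 'M[F]_(n, q)) :
  castmx (erefl m, e) A *m castmx (e, erefl q) B = A *m B.
Proof. by case: p / e. Qed.

Lemma C2 n p q (e : n = p) (A : 'M[F]_n) (B : 'M[F]_(n, q)) :
  castmx (e, e) A *m castmx (e, erefl q) B = castmx (e, erefl q) (A *m B).
Proof. by case: p / e. Qed.

Lemma C3 n p (e : n = p) (A : 'M[F]_n) : (castmx (e, e) A \in unitmx) = (A \in unitmx).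
Proof. by case: p / e. Qed.

Lemma C4 n p q (e : n = p) (A : 'M[F]_p) (B : 'M[F]_(n, q)) :
  castmx (esym e, esym e) A *m B = castmx (esym e, erefl q) (A *m castmx (e, erefl q) B).
Proof. by move: A; case: p / e. Qed.

Lemma U1 r s I1 I2 (e : (r + s = I2 * I1)%N) (G : 'I_r -> 'M[F]_(I1, I2)) Gc q (W : 'M[F]_(r, q)) :
  Umx e G Gc *m castmx (e, erefl q) (col_mx W 0) = (\matrix_(i, k) vecc (G k) i 0) *m W.
Proof. by rewrite /Umx C1 mul_row_col mulmx0 addr0. Qed.

Lemma U2 r I1 I2 (G : 'I_r -> 'M[F]_(I1, I2)) (w : 'cV[F]_r) :
  (\matrix_(i, k) vecc (G k) i 0) *m w = vecc (\sum_l w l 0 *: G l).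
Proof.
apply/colP => i; rewrite linear_sum summxE [in LHS]mxE; apply: eq_bigr => l _.
by rewrite linearZ /= [in RHS]mxE [in LHS]mxE mulrC.
Qed.

Lemma U3 r I1 I2 (G : 'I_r -> 'M[F]_(I1, I2)) k :
  (\matrix_(i, k) vecc (G k) i 0) *m delta_mx k 0 = vecc (G k).
Proof. by rewrite -colE; apply/colP => i; rewrite !mxE. Qed.

Lemma Pt1 r s n (e : (r + s = n)%N) P Y Pbar q (W : 'M[F]_(r, q)) :
  Ptilde e P Y Pbar *m castmx (e, erefl q) (col_mx W 0) = castmx (e, erefl q) (col_mx (P *m W) 0).
Proof. by rewrite /Ptilde C2 mul_block_col !mulmx0 mul0mx addr0 add0r. Qed.

Lemma fG r s I1 I2 (e : (r + s = I2 * I1)%N)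
    (G G' : 'I_r -> 'M[F]_(I1, I2)) (Gc Gc' : 'I_s -> 'M[F]_(I1, I2)) P Y Pbar k :
  complementary e G' Gc' ->
  foldc (Umx e G Gc *m Ptilde e P Y Pbar *m invmx (Umx e G' Gc') *m vecc (G' k))
  = \sum_l P l k *: G l.
Proof.
move=> cU.
have h : invmx (Umx e G' Gc') *m vecc (G' k) = castmx (e, erefl 1%N) (col_mx (delta_mx k 0) 0).
  by rewrite -(U3 G') -(U1 e G' Gc') mulKmx.
rewrite -mulmxA h -mulmxA Pt1 U1 U2 foldcK; apply: eq_bigr => l _.
by rewrite -colE mxE.
Qed.


Lemma invcomb r (V : lmodType F) (P : 'M[F]_r) (G H : 'I_r -> V) :
  P \in unitmx -> (forall k, H k = \sum_l P l k *: G l) ->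
  forall j, G j = \sum_k (invmx P) k j *: H k.
Proof.
move=> Pu h j.
under eq_bigr => k _ do rewrite h scaler_sumr.
rewrite exchange_big /=.
have e2 : forall l, \sum_k invmx P k j *: (P l k *: G l) = (P *m invmx P) l j *: G l.
  by move=> l; rewrite mxE scaler_suml; apply: eq_bigr => k _; rewrite scalerA mulrC.
under eq_bigr => l _ do rewrite e2 (mulmxV Pu).
rewrite (bigD1 j) //= mxE eqxx mulr1n scale1r big1 ?addr0 // => l lj.
by rewrite mxE (negPf lj) mulr0n scale0r.
Qed.

Lemma slocc_of r I1 I2 (G G' : 'I_r -> 'M[F]_(I1, I2)) (P : 'M[F]_r) A B :
  P \in unitmx -> A \in unitmx -> B \in unitmx ->
  (forall k, A *m G' k *m B = \sum_l P l k *: G l) -> slocc G' G.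
Proof.
move=> Pu Au Bu h; exists (invmx P)^T, A, B^T.
split; rewrite ?unitmx_tr ?unitmx_inv // => k; rewrite trmxK.
rewrite (invcomb Pu h k); apply: eq_bigr => l _; by rewrite mxE.
Qed.

Lemma sloccT_of r I (G G' : 'I_r -> 'M[F]_I) (P : 'M[F]_r) A B :
  P \in unitmx -> A \in unitmx -> B \in unitmx ->
  (forall k, A *m (G' k)^T *m B = \sum_l P l k *: G l) -> slocc G' (stateT G).
Proof.
move=> Pu Au Bu h; exists (invmx P)^T, B^T, A.
split; rewrite ?unitmx_tr ?unitmx_inv // => k.
rewrite /stateT (invcomb Pu h k) linear_sum; apply: eq_bigr => l _.
by rewrite mxE linearZ /= !trmx_mul trmxK mulmxA.
Qed.

Lemma partA r s I1 I2 (e : (r + s = I2 * I1)%N)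
    (G G' : 'I_r -> 'M[F]_(I1, I2)) (Gc Gc' : 'I_s -> 'M[F]_(I1, I2)) :
  complementary e G Gc -> complementary e G' Gc' -> slocc G' G -> cond_star e G Gc G' Gc'.
Proof.
move=> cU cU' [P0 [A1 [A2 [P0u A1u A2u hG]]]].
have cUu : Umx e G Gc \in unitmx := cU.
have cU'u : Umx e G' Gc' \in unitmx := cU'.
pose K : 'M[F]_(I2 * I1) := (lin_mx (sandw A2 A1^T))^T.
have Kv : forall X, K *m vecc X = vecc (A1 *m X *m A2^T).
  move=> X; rewrite /K /vecc -trmx_mul mul_vec_lin /sandw !trmx_mul trmxK !mulmxA //.
have Ku : K \in unitmx.
  rewrite unitmx_tr -row_free_unit; apply/inj_row_free => v; rewrite mul_rV_lin /sandw.
  move=> /eqP; rewrite mxvec_eq0 => /eqP h00.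
  have h0 : A2 *m vec_mx v *m A1^T = 0 := h00.
  have h1 : vec_mx v = 0.
    have -> : vec_mx v = invmx A2 *m (A2 *m vec_mx v *m A1^T) *m invmx A1^T.
      by rewrite -mulmxA mulmxK ?unitmx_tr // mulKmx.
    by rewrite h0 mulmx0 mul0mx.
  by rewrite -[v]vec_mxK h1 linear0.
pose UG := \matrix_(i, k) vecc (G k) i 0.
pose UG' := \matrix_(i, k) vecc (G' k) i 0.
have KUGl : forall i l, (K *m UG') i l = vecc (A1 *m G' l *m A2^T) i 0.
  by move=> i l; rewrite -Kv -(U3 G') mulmxA -colE [RHS]mxE.
have KUG : K *m UG' = UG *m invmx P0^T.
  have e1 : UG = (K *m UG') *m P0^T.
    apply/matrixP => i k; rewrite [in LHS]mxE hG linear_sum summxE [in RHS]mxE.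
    apply: eq_bigr => l _; rewrite KUGl linearZ /= [in LHS]mxE [P0^T _ _]mxE mulrC //.
  by rewrite e1 mulmxK // unitmx_tr.
pose Pt := invmx (Umx e G Gc) *m K *m Umx e G' Gc'.
have Ptu : Pt \in unitmx by rewrite !unitmx_mul unitmx_inv cUu Ku cU'u.
pose Q := castmx (esym e, esym e) Pt.
have QL : Q *m col_mx 1%:M 0 = col_mx (invmx P0^T) 0.
  rewrite /Q C4 /Pt -!mulmxA U1 mulmx1 KUG -(U1 e G Gc) (mulKmx cUu).
  exact: (castmxK e (erefl r)).
have dl0 : dlsubmx Q = 0.
  have : dsubmx (Q *m col_mx 1%:M 0) = 0 by rewrite QL col_mxKd.
  by rewrite -mul_dsub_mx -[dsubmx Q]hsubmxK mul_row_col mulmx1 mulmx0 addr0.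
have QB : Q = block_mx (ulsubmx Q) (ursubmx Q) 0 (drsubmx Q) by rewrite -dl0 submxK.
have Qu : Q \in unitmx by rewrite /Q C3.
have [Pu Pbu] : ulsubmx Q \in unitmx /\ drsubmx Q \in unitmx.
  by move: Qu; rewrite {1}QB unitmxE det_ublock unitrM -!unitmxE => /andP [h1 h2]; split.
exists (ulsubmx Q), (drsubmx Q), (ursubmx Q); split => // a.
have -> : Ptilde e (ulsubmx Q) (ursubmx Q) (drsubmx Q) = Pt by rewrite /Ptilde -QB /Q castmxKV.
have -> : Umx e G Gc *m Pt *m invmx (Umx e G' Gc') = K.
  by rewrite /Pt !mulmxA (mulmxV cUu) mul1mx (mulmxK cU'u).
rewrite -[a]veccK Kv foldcK mxrankMfree ?row_free_unit ?unitmx_tr //.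
by rewrite foldcK -mxrank_tr trmx_mul mxrankMfree ?row_free_unit ?unitmx_tr // mxrank_tr.
Qed.

End App.

Unset Implicit Arguments.
Set Strict Implicit.

Theorem corollary1 (F : numClosedFieldType) :
  (forall (r s I1 I2 : nat) (e : (r + s = I2 * I1)%N)
     (G G' : 'I_r -> 'M[F]_(I1, I2)) (Gc Gc' : 'I_s -> 'M[F]_(I1, I2)),
     lin_indep G -> lin_indep G' ->
     complementary e G Gc -> complementary e G' Gc' ->
     (* (a) *) (slocc G' G -> cond_star e G Gc G' Gc') /\
     (* (b) *) (I1 <> I2 -> cond_star e G Gc G' Gc' -> slocc G' G)) /\
  (forall (r s I : nat) (e : (r + s = I * I)%N)
     (G G' : 'I_r -> 'M[F]_(I, I)) (Gc Gc' : 'I_s -> 'M[F]_(I, I)),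
     lin_indep G -> lin_indep G' ->
     complementary e G Gc -> complementary e G' Gc' ->
     (* (c) *) cond_star e G Gc G' Gc' -> slocc G' G \/ slocc G' (stateT G)).
Proof.
split.
  move=> r s I1 I2 e G G' Gc Gc' _ _ cU cU'; split; first exact: partA.
  move=> ne [P [Pbar [Y [Pu Pbu hr]]]].
  pose Mx := Umx e G Gc *m Ptilde e P Y Pbar *m invmx (Umx e G' Gc').
  have frk : forall X, \rank (appmap Mx (erefl (I2 * I1)%N) X) = \rank X.
    by move=> X; rewrite /appmap castmx_id hr foldcK.
  have fk : forall k, appmap Mx (erefl (I2 * I1)%N) (G' k) = \sum_l P l k *: G l.
    by move=> k; rewrite /appmap castmx_id fG.
  have [A [B [Au Bu fX]]] := core_rect frk (introN eqP ne).
  by apply: (slocc_of Pu Au Bu) => k; rewrite -fk; symmetry; apply: fX.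
move=> r s I e G G' Gc Gc' _ _ cU cU' [P [Pbar [Y [Pu Pbu hr]]]].
pose Mx := Umx e G Gc *m Ptilde e P Y Pbar *m invmx (Umx e G' Gc').
have frk : forall X, \rank (appmap Mx (erefl (I * I)%N) X) = \rank X.
  by move=> X; rewrite /appmap castmx_id hr foldcK.
have fk : forall k, appmap Mx (erefl (I * I)%N) (G' k) = \sum_l P l k *: G l.
  by move=> k; rewrite /appmap castmx_id fG.
have [[A [B [Au Bu fX]]]|[A [B [Au Bu fX]]]] := core_sq frk.
  by left; apply: (slocc_of Pu Au Bu) => k; rewrite -fk; symmetry; apply: fX.
by right; apply: (sloccT_of Pu Au Bu) => k; rewrite -fk; symmetry; apply: fX.
Qed.
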